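(* Let $\lambda$ be a strict partition, $\mu$ any probability distribution on $J(P^{\mathrm{shift}}_\lambda)$, and $[i,j]\in P^{\mathrm{shift}}_\lambda$. Then \[\mathbb{E}(\mu;R^{\mathrm{shift}}_{ij})=1+\sum_{c\in C^{\mathrm{shift}}_{ij}(\lambda)}\mathbb{P}(\nu\sim\mu;\ c\in\nu).\]
   Context: Strict partitions, $P^{\mathrm{shift}}_\lambda$ (boxes $[i,j]$, $1\le i\le\ell(\lambda)$, $i\le j\le i+\lambda_i-1$, ordered componentwise), and toggle statistics $\mathcal{T}^\pm_p$ (with $\mathcal{T}^+_p(I)=1$ iff $p\notin I$ is minimal in the complement, $\mathcal{T}^-_p(I)=1$ iff $p\in I$ is maximal in $I$) are as usual. Order ideals of $P^{\mathrm{shift}}_\lambda$ are identified with strict partitions $\nu\subseteq\lambda$. The shifted rook is $R^{\mathrm{shift}}_{ij}:=\sum_{i'\le i,j'\le j}\mathcal{T}^+_{[i',j']}+\sum_{i'\ge i,j'\ge j}\mathcal{T}^-_{[i',j']}-\sum_{i'<i,j'<j,i'<j'}\mathcal{T}^-_{[i',j']}-\sum_{i'>i,j'>j,i'<j'}\mathcal{T}^+_{[i',j']}$ (sums over boxes of $P^{\mathrm{shift}}_\lambda$). Outward corners: $C^{\mathrm{shift}}(\lambda)$ is the set of indices $1\le t\le\ell(\lambda)-1$ with $\lambda_t-\lambda_{t+1}\ge2$; the corner $c=c_t$ occurs at lattice point $(t,\,t+\lambda_{t+1})$ (row coordinate, column coordinate; box $[i,j]$ has southeast corner at lattice point $(i,j)$);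 this is a north step followed by an east step on the southeast border of the shifted diagram. An order ideal $\nu$ contains $c_t$ (written $c_t\in\nu$) iff $\nu_{t+1}=\lambda_{t+1}$ and $\nu_t\ge\lambda_{t+1}+2$. $C^{\mathrm{shift}}_{ij}(\lambda)$ is the set of corners occurring at $(t,t+\lambda_{t+1})$ strictly southeast of the center of box $[i,j]$, i.e. with $t\ge i$ and $t+\lambda_{t+1}\ge j$. *)

(* Defs.v *)
From HB Require Import structures.
From mathcomp Require Import all_boot all_order all_algebra.
Set Implicit Arguments. Unset Strict Implicit. Unset Printing Implicit Defensive.
Import Order.TTheory GRing.Theory Num.Theory.

Definition strict_partition (lam : seq nat) : bool :=
  sorted gtn lam && (0 \notin lam).

(* lam_t with 1-based indexing (0 beyond the length). *)
Definition part (lam : seq nat) (t : nat) : nat := nth 0 lam t.-1.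

(* Bound on coordinates of boxes: all boxes [i,j] of the shifted diagram
   satisfy i, j < bnd lam. *)
Definition bnd (lam : seq nat) : nat := (size lam + head 0 lam).+1.

Definition box (lam : seq nat) : finType := ('I_(bnd lam) * 'I_(bnd lam))%type.

Definition inPn (lam : seq nat) (i j : nat) : bool :=
  [&& 1 <= i, i <= size lam, i <= j & j < i + part lam i].

Definition inP (lam : seq nat) (p : box lam) : bool := inPn lam p.1 p.2.

Definition boxle (lam : seq nat) (p q : box lam) : bool :=
  (p.1 <= q.1)%N && (p.2 <= q.2)%N.

Definition is_ideal (lam : seq nat) (I : {set box lam}) : bool :=
  [forall p, (p \in I) ==> inP p] &&
  [forall p, forall q, [&& p \in I, inP q & boxle q p] ==> (q \in I)].

Definition Tplus (lam : seq nat) (I : {set box lam}) (p : box lam) : nat :=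
  [&& inP p, p \notin I &
      [forall q, [&& inP q, boxle q p & q != p] ==> (q \in I)]].

Definition Tminus (lam : seq nat) (I : {set box lam}) (p : box lam) : nat :=
  [&& inP p, p \in I &
      [forall q, [&& inP q, boxle p q & q != p] ==> (q \notin I)]].

Definition Rshift (lam : seq nat) (i j : nat) (I : {set box lam}) : int :=
  (\sum_(p : box lam | [&& inP p, p.1 <= i & p.2 <= j]%N) Tplus I p)%:Z
  + (\sum_(p : box lam | [&& inP p, i <= p.1 & j <= p.2]%N) Tminus I p)%:Z
  - (\sum_(p : box lam | [&& inP p, p.1 < i, p.2 < j & p.1 < p.2]%N) Tminus I p)%:Z
  - (\sum_(p : box lam | [&& inP p, i < p.1, j < p.2 & p.1 < p.2]%N) Tplus I p)%:Z.

Definition rowlen (lam : seq nat) (I : {set box lam}) (t : nat) : nat :=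
  #|[set p in I | val p.1 == t]|.

Definition is_corner (lam : seq nat) (t : nat) : bool :=
  [&& 1 <= t, t <= (size lam).-1 & part lam t.+1 + 2 <= part lam t].

Definition corner_in (lam : seq nat) (t : nat) (I : {set box lam}) : bool :=
  (rowlen I t.+1 == part lam t.+1) && (part lam t.+1 + 2 <= rowlen I t).

Definition corner_ij (lam : seq nat) (i j t : nat) : bool :=
  [&& is_corner lam t, i <= t & j <= t + part lam t.+1].

Local Open Scope ring_scope.

Definition is_distribution (R : realFieldType) (lam : seq nat)
    (mu : {set box lam} -> R) : Prop :=
  (forall I, 0 <= mu I) /\ (forall I, ~~ is_ideal I -> mu I = 0) /\
  \sum_(I : {set box lam} | is_ideal I) mu I = 1.

Definition expect (R : realFieldType) (lam : seq nat)
    (mu : {set box lam} -> R) (f : {set box lam} -> int) : R :=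
  \sum_(I : {set box lam} | is_ideal I) mu I * (f I)%:~R.

Definition prob (R : realFieldType) (lam : seq nat)
    (mu : {set box lam} -> R) (E : {set box lam} -> bool) : R :=
  \sum_(I : {set box lam} | is_ideal I && E I) mu I.

(* Main.v *)
Require Import Defs.
From HB Require Import structures.
From mathcomp Require Import all_boot all_order all_algebra zify.
Import Order.TTheory GRing.Theory Num.Theory.
Set Implicit Arguments. Unset Strict Implicit. Unset Printing Implicit Defensive.


Lemma part_dec lam a : strict_partition lam -> 1 <= a -> a < size lam ->
  part lam a.+1 < part lam a.
Proof.
move=> /andP[Hs H0] H1 H2; rewrite /part /=.
have gt_tr : transitive gtn by move=> x y z h1 h2; exact: ltn_trans h2 h1.
have := @sorted_ltn_nth _ gtn gt_tr 0 lam Hs a.-1 a.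
rewrite !inE; move=> /(_ _ _ _); apply => //; lia.
Qed.

Lemma part_pos lam a : strict_partition lam -> 1 <= a <= size lam -> 0 < part lam a.
Proof.
move=> /andP[_ H0] /andP[H1 H2]; rewrite /part lt0n; apply/negP=> /eqP E.
have : nth 0 lam a.-1 \in lam.
 apply: mem_nth; apply: (leq_trans _ H2); rewrite -subn1; lia.
move=> Hin; by move: H0; rewrite -E Hin.
Qed.

Lemma part0 lam a : size lam < a -> part lam a = 0.
Proof. by move=> H; rewrite /part nth_default //; lia. Qed.

Lemma part_dec2 lam a d : strict_partition lam -> 1 <= a -> a + d <= size lam ->
  part lam (a + d) + d <= part lam a.
Proof.
move=> Hs H1; elim: d => [|d IH] H; first by rewrite !addn0 leqnn.
have h1 : 1 <= a + d by lia.
have h2 : a + d < size lam by move: H; rewrite addnS.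
have := part_dec Hs h1 h2; have := IH (ltnW h2); rewrite (addnS a d); lia.
Qed.

Lemma box_ex (lam : seq nat) : box lam = ('I_(size lam + head 0 lam).+1 * 'I_(size lam + head 0 lam).+1)%type.
Proof. by []. Qed.
Definition mkb lam (a b : nat) : box lam := (@inord (size lam + head 0 lam) a, @inord (size lam + head 0 lam) b).

Definition mem lam (I : {set box lam}) (a b : nat) : bool :=
  [exists p : box lam, (p \in I) && ((val p.1 == a) && (val p.2 == b))].

Lemma memE lam (I : {set box lam}) (p : box lam) : mem I (val p.1) (val p.2) = (p \in I).
Proof.
apply/existsP/idP => [[q /andP[Hq /andP[/eqP e1 /eqP e2]]]|Hp]; last first.
  by exists p; rewrite Hp !eqxx.
have -> : p = q by case: p q e1 e2 Hq => [x y] [x' y'] /= /val_inj -> /val_inj ->.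
done.
Qed.

Lemma head_part lam : head 0 lam = part lam 1.
Proof. by case: lam. Qed.

Lemma inPn_bnd lam a b : strict_partition lam -> inPn lam a b -> a < bnd lam /\ b < bnd lam.
Proof.
move=> Hs /and4P[h1 h2 h3 h4]; rewrite /bnd head_part.
have := part_dec2 Hs (_ : 1 <= 1) (_ : 1 + (a - 1) <= size lam).
rewrite subnKC //; move=> /(_ isT); lia.
Qed.

Lemma mkbK lam a b : a < bnd lam -> b < bnd lam ->
  val (mkb lam a b).1 = a /\ val (mkb lam a b).2 = b.
Proof. by move=> ha hb; rewrite /mkb /= !inordK. Qed.

Lemma mem_inP lam (I : {set box lam}) a b : is_ideal I -> mem I a b -> inPn lam a b.
Proof.
move=> /andP[/forallP H1 _] /existsP[p /andP[Hp /andP[/eqP <- /eqP <-]]].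
by have := H1 p; rewrite Hp.
Qed.

Lemma mem_closed lam (I : {set box lam}) a b a' b' : strict_partition lam -> is_ideal I ->
  mem I a b -> inPn lam a' b' -> a' <= a -> b' <= b -> mem I a' b'.
Proof.
move=> Hs /andP[_ /forallP H2] /existsP[p /andP[Hp /andP[/eqP e1 /eqP e2]]] Hin ha hb.
have [B1 B2] := inPn_bnd Hs Hin.
have [K1 K2] := mkbK B1 B2.
rewrite -K1 -K2 (memE I (mkb lam a' b')).
have := H2 p; move=> /forallP /(_ (mkb lam a' b')) /implyP; apply.
by rewrite Hp /inP K1 K2 Hin /boxle K1 K2 e1 e2 ha hb.
Qed.

Lemma leq_b (u v : bool) : (u -> v) -> (u : nat) <= v.
Proof. by case: u v => [] [] // /(_ isT). Qed.

Lemma sum_interval N a b : \sum_(x < N) (a <= x < b) = minn b N - a.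
Proof.
elim: N => [|N IH]; first by rewrite big_ord0; lia.
rewrite big_ord_recr /= IH; lia.
Qed.

Lemma row_char (P : nat -> bool) N a : (forall b, P b -> a <= b < N) ->
  (forall b b', P b -> a <= b' <= b -> P b') ->
  forall b, P b = (a <= b < a + \sum_(x < N) P x).
Proof.
move=> HB HC b; apply/idP/idP => [Pb|Hb].
  have [h1 h2] := andP (HB b Pb).
  have : \sum_(x < N) (a <= x < b.+1) <= \sum_(x < N) P x.
    apply: leq_sum => x _; apply: leq_b => /andP[x1 x2]; apply: (HC b) => //; lia.
  rewrite sum_interval; lia.
case: (boolP (P b)) => // /negP nPb.
have : \sum_(x < N) P x <= \sum_(x < N) (a <= x < b).
  apply: leq_sum => x _; apply: leq_b => Px.
  have [h1 h2] := andP (HB x Px).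
  rewrite h1 /=; rewrite ltnNge; apply/negP => hx.
  by apply: nPb; apply: (HC x) => //; lia.
rewrite sum_interval; lia.
Qed.

Lemma sum_uniq (T : finType) (F : T -> bool) : (forall x y, F x -> F y -> x = y) ->
  \sum_(x : T) (F x : nat) = [exists x, F x].
Proof.
move=> U; case: existsP => [[x Fx]|nF].
  rewrite (bigD1 x) //= Fx big1 // => y ny.
  by case: (boolP (F y)) => // Fy'; rewrite (U _ _ Fx Fy') eqxx in ny.
by rewrite big1 // => y _; case: (boolP (F y)) => // Fy; case: nF; exists y.
Qed.

Lemma rowlen_sum lam (I : {set box lam}) t :
  rowlen I t = \sum_(b < bnd lam) mem I t b.
Proof.
rewrite /rowlen -sum1_card big_mkcond /=.
transitivity (\sum_(p : box lam) \sum_(y < bnd lam)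
   ((p \in I) && ((val p.1 == t) && (val p.2 == y)) : nat)).
  apply: eq_bigr => p _; rewrite inE.
  rewrite (@sum_uniq _ (fun y : 'I_(bnd lam) => (p \in I) && ((val p.1 == t) && (val p.2 == y)))).
    have E1 : [exists x : 'I_(bnd lam), p.2 == x] by apply/existsP; exists p.2.
    have E0 : [exists x : 'I_(bnd lam), false] = false by apply/existsP => -[].
    by case: (p \in I) => //=; case: (val p.1 == t) => //=; rewrite ?E1 ?E0.
  by move=> x y /and3P[_ _ /eqP e1] /and3P[_ _ /eqP e2]; apply: ord_inj; rewrite -e1 -e2.
rewrite exchange_big /=; apply: eq_bigr => y _.
rewrite sum_uniq //.
move=> [x1 x2] [y1 y2] /and3P[_ /eqP e1 /eqP e2] /and3P[_ /eqP f1 /eqP f2] /=.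
by congr pair; apply: val_inj; rewrite /= ?e1 ?f1 ?e2 ?f2.
Qed.

Lemma memnu lam (I : {set box lam}) a b : strict_partition lam -> is_ideal I ->
  mem I a b = (a <= b < a + rowlen I a).
Proof.
move=> Hs HI; rewrite rowlen_sum; apply: (@row_char (mem I a) (bnd lam) a) => [c Hc|c c' Hc Hc'].
  have := mem_inP HI Hc; move=> Hin; have [_ B] := inPn_bnd Hs Hin.
  by move: Hin => /and4P[_ _ -> _]; rewrite B.
have := mem_inP HI Hc => /and4P[h1 h2 h3 h4].
apply: (mem_closed Hs HI Hc) => //; last by lia.
by rewrite /inPn h1 h2 /=; apply/andP; split; lia.
Qed.

Lemma nu0 lam (I : {set box lam}) a : is_ideal I -> ~~ ((1 <= a) && (a <= size lam)) ->
  rowlen I a = 0.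
Proof.
move=> HI Ha; rewrite rowlen_sum big1 // => b _.
case: (boolP (mem I a b)) => // /(mem_inP HI) /and4P[h1 h2 _ _].
by move: Ha; rewrite h1 h2.
Qed.

Lemma nu_pos lam (I : {set box lam}) a : is_ideal I -> 0 < rowlen I a -> 1 <= a <= size lam.
Proof.
move=> HI H; case: (boolP ((1 <= a) && (a <= size lam))) => // /(nu0 HI) E.
by rewrite E in H.
Qed.

Lemma nu_le lam (I : {set box lam}) a : strict_partition lam -> is_ideal I ->
  rowlen I a <= part lam a.
Proof.
move=> Hs HI; case: (posnP (rowlen I a)) => [->//|H].
have : mem I a (a + rowlen I a - 1) by rewrite memnu //; lia.
by move=> /(mem_inP HI) /and4P[_ _ _]; lia.
Qed.

Lemma clos lam (I : {set box lam}) a b a' b' : strict_partition lam -> is_ideal I ->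
  a <= b < a + rowlen I a -> inPn lam a' b' -> a' <= a -> b' <= b -> b' < a' + rowlen I a'.
Proof.
move=> Hs HI H Hin h1 h2; rewrite -(memnu _ _ Hs HI) in H.
have := mem_closed Hs HI H Hin h1 h2; rewrite memnu //; lia.
Qed.

Lemma nu_dec lam (I : {set box lam}) a : strict_partition lam -> is_ideal I ->
  1 <= a -> 0 < rowlen I a.+1 -> rowlen I a.+1 < rowlen I a.
Proof.
move=> Hs HI ha H.
have /andP[p1 p2] := nu_pos HI H.
have := nu_le a.+1 Hs HI.
have := part_dec Hs ha p2 => hd hl.
have := @clos lam I a.+1 (a + rowlen I a.+1) a (a + rowlen I a.+1) Hs HI.
rewrite /inPn; move=> hc; have := hc _ _ _ _; lia.
Qed.

Lemma memb lam (I : {set box lam}) a b : strict_partition lam -> is_ideal I ->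
  a < bnd lam -> b < bnd lam -> (mkb lam a b \in I) = (a <= b < a + rowlen I a).
Proof.
move=> Hs HI ha hb; have [K1 K2] := mkbK ha hb.
by rewrite -(memE I (mkb lam a b)) K1 K2 memnu.
Qed.

Lemma Tplus_char lam (I : {set box lam}) (p : box lam) : strict_partition lam -> is_ideal I ->
  Tplus I p = [&& inPn lam (val p.1) (val p.2), val p.2 == val p.1 + rowlen I (val p.1) &
      (val p.1 == 1) || (rowlen I (val p.1) + 2 <= rowlen I (val p.1).-1)].
Proof.
move=> Hs HI; rewrite /Tplus; congr nat_of_bool.
rewrite /inP -(memE I p) memnu //.
case: p => [[a Ba] [b Bb]] /=.
case: (boolP (inPn lam a b)) => //= Hin.
have /and4P[i1 i2 i3 i4] := Hin.
have hn := nu_le a Hs HI.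
apply/idP/idP.
  move=> /andP[Hn /forallP Hq].
  have Hb : b = a + rowlen I a.
    apply/eqP; rewrite eqn_leq; apply/andP; split; last by lia.
    rewrite leqNgt; apply/negP => hb.
    have Bc : b - 1 < bnd lam by lia.
    have := Hq (mkb lam a (b - 1)); rewrite memb // /inP /boxle.
    have [K1 K2] := mkbK Ba Bc; rewrite K1 K2 /inPn /=.
    case: eqP => [[_ /(congr1 val)]|_]; first by rewrite /= K2; lia.
    by rewrite /=; lia.
  rewrite Hb eqxx /=; case: eqP => //= ha1.
  have ha2 : 2 <= a by lia.
  have hd := part_dec Hs (_ : 1 <= a.-1) (_ : a.-1 < size lam).
  rewrite prednK in hd; last by lia.
  have Bc : a.-1 < bnd lam by rewrite -subn1; lia.
  have := Hq (mkb lam a.-1 b); rewrite memb // /inP /boxle.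
  have [K1 K2] := mkbK Bc Bb; rewrite K1 K2 /inPn /=.
  case: eqP => [[/(congr1 val)]|_]; first by rewrite /= K1 -subn1; lia.
  have := hd _ _; rewrite -!subn1; lia.
move=> /andP[/eqP Hb Hc]; apply/andP; split; first by apply/negP; lia.
apply/forallP => -[[a' Ba'] [b' Bb']]; apply/implyP => /and3P[Hq Hle Hne].
rewrite -(memE I (Ordinal Ba', Ordinal Bb')) memnu //=.
move: Hq => /= Hq; have /and4P[j1 j2 j3 j4] := Hq; move: Hle; rewrite /boxle /= => /andP[l1 l2].
case: (ltngtP a' a) => [ha|ha|ha]; [|lia|].
  have hc : rowlen I a + 2 <= rowlen I a.-1 by move: Hc; case: eqP => //; lia.
  have := @clos lam I a.-1 b a' b' Hs HI _ Hq _ l2.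
  rewrite -!subn1 in hc *; move=> h; rewrite j3 /=; apply: h; lia.
rewrite j3 /=.
have : b' != a + rowlen I a.
  apply/eqP => eb; move: Hne; subst a'.
  by rewrite xpair_eqE -!val_eqE /= eqxx eb Hb eqxx.
rewrite ha; lia.
Qed.

Lemma part_mono lam x y : strict_partition lam -> 1 <= x -> x <= y -> y <= size lam ->
  part lam y + y <= part lam x + x.
Proof.
move=> Hs h1 h2 h3; have := part_dec2 Hs h1 (_ : x + (y - x) <= size lam).
rewrite subnKC //; move=> /(_ h3); lia.
Qed.

Lemma Tminus_char lam (I : {set box lam}) (p : box lam) : strict_partition lam -> is_ideal I ->
  Tminus I p = [&& inPn lam (val p.1) (val p.2), (val p.2).+1 == val p.1 + rowlen I (val p.1) &
      (rowlen I (val p.1) == 1) || (rowlen I (val p.1).+1 + 2 <= rowlen I (val p.1))].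
Proof.
move=> Hs HI; rewrite /Tminus; congr nat_of_bool.
rewrite /inP -(memE I p) memnu //.
case: p => [[a Ba] [b Bb]] /=.
case: (boolP (inPn lam a b)) => //= Hin.
have /and4P[i1 i2 i3 i4] := Hin.
have hn := nu_le a Hs HI.
have hn1 := nu_le a.+1 Hs HI.
apply/idP/idP.
  move=> /andP[Hm /forallP Hq].
  have Hb : b.+1 = a + rowlen I a.
    apply/eqP; rewrite eqn_leq; apply/andP; split; first by lia.
    rewrite leqNgt; apply/negP => hb.
    have Hin' : inPn lam a b.+1 by rewrite /inPn; lia.
    have [_ Bc] := inPn_bnd Hs Hin'.
    have := Hq (mkb lam a b.+1); rewrite memb // /inP /boxle.
    have [K1 K2] := mkbK Ba Bc; rewrite K1 K2 Hin' /=.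
    case: eqP => [[_ /(congr1 val)]|_]; first by rewrite /= K2; lia.
    by rewrite /= !leqnn /=; lia.
  rewrite Hb eqxx /=; case: eqP => //= hn1'.
  rewrite leqNgt; apply/negP => hc.
  have hp : 0 < rowlen I a.+1 by lia.
  have /andP[_ ha1] := nu_pos HI hp.
  have Hin' : inPn lam a.+1 b by rewrite /inPn; lia.
  have [Bc _] := inPn_bnd Hs Hin'.
  have := Hq (mkb lam a.+1 b); rewrite memb // /inP /boxle.
  have [K1 K2] := mkbK Bc Bb; rewrite K1 K2 Hin' /=.
  case: eqP => [[/(congr1 val)]|_]; first by rewrite /= K1; lia.
  by rewrite /= !leqnn /=; lia.
move=> /andP[/eqP Hb Hc]; apply/andP; split; first by lia.
apply/forallP => -[[a' Ba'] [b' Bb']]; apply/implyP => /and3P[Hq Hle Hne].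
rewrite -(memE I (Ordinal Ba', Ordinal Bb')) memnu //=.
move: Hq => /= Hq; have /and4P[j1 j2 j3 j4] := Hq; move: Hle; rewrite /boxle /= => /andP[l1 l2].
rewrite j3 /= -leqNgt; apply/negP => hlt.
have Hm : a' <= b' < a' + rowlen I a' by lia.
case: (ltngtP b b') => [hb|hb|hb]; [ |lia| ].
- have hm := part_mono Hs i1 l1 j2.
  have := @clos lam I a' b' a b' Hs HI Hm _ l1 (leqnn _).
  by move=> /(_ _); rewrite /inPn; lia.
- case: (ltngtP a a') => [ha|ha|ha]; [ |lia| ]; last first.
    by move: Hne; rewrite xpair_eqE -!val_eqE /= ha hb !eqxx.
  have hm := part_mono Hs (_ : 1 <= a.+1) ha j2.
  have := @clos lam I a' b' a.+1 b Hs HI Hm _ ha (eq_leq hb).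
  move=> /(_ _); rewrite /inPn; move: Hc; case: eqP; lia.
Qed.

Lemma sum_box_rows0 lam (C G : nat -> nat -> bool) (f : nat -> nat) :
  (forall a b, G a b -> b = f a) ->
  \sum_(p : box lam | C (val p.1) (val p.2)) (G (val p.1) (val p.2) : nat) =
  \sum_(a < bnd lam) [&& C a (f a), G a (f a) & f a < bnd lam].
Proof.
move=> HG; rewrite big_mkcond /=.
rewrite -(pair_big xpredT xpredT (fun (x y : 'I_(bnd lam)) =>
   if C x y then (G x y : nat) else 0)) /=.
apply: eq_bigr => x _.
transitivity (\sum_(y < bnd lam) (C x y && G x y : nat)).
  by apply: eq_bigr => y _; case: (C x y).
rewrite sum_uniq; last first.
  move=> y y' /andP[_ /HG e1] /andP[_ /HG e2]; apply: ord_inj; by rewrite e1 e2.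
congr (nat_of_bool _).
apply/idP/idP => [/existsP[y /andP[Cy Gy]]|/and3P[Cf Gf Bf]].
  by have := HG _ _ Gy => e; rewrite -e Cy Gy ltn_ord.
by apply/existsP; exists (Ordinal Bf); rewrite /= Cf Gf.
Qed.

Lemma sum_box_rows lam (C G : nat -> nat -> bool) (f : nat -> nat) :
  (forall a b, G a b -> b = f a) -> (forall a b, G a b -> b < bnd lam) ->
  \sum_(p : box lam | C (val p.1) (val p.2)) (G (val p.1) (val p.2) : nat) =
  \sum_(0 <= a < bnd lam) (C a (f a) && G a (f a)).
Proof.
move=> HG HB; rewrite (@sum_box_rows0 lam C G f HG) big_mkord; apply: eq_bigr => a _.
by case: (boolP (G a (f a))) => [/HB ->|]; rewrite ?andbT ?andbF.
Qed.

Definition Xt lam (I : {set box lam}) i j a : bool :=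
  [&& inPn lam a (a + rowlen I a), a <= i & a + rowlen I a <= j] &&
  [&& inPn lam a (a + rowlen I a), a + rowlen I a == a + rowlen I a &
      (a == 1) || (rowlen I a + 2 <= rowlen I a.-1)].

Definition Yt lam (I : {set box lam}) i j a : bool :=
  [&& inPn lam a (a + rowlen I a).-1, a < i, (a + rowlen I a).-1 < j & a < (a + rowlen I a).-1] &&
  [&& inPn lam a (a + rowlen I a).-1, ((a + rowlen I a).-1).+1 == a + rowlen I a &
      (rowlen I a == 1) || (rowlen I a.+1 + 2 <= rowlen I a)].

Lemma low_step lam (I : {set box lam}) i j m : strict_partition lam -> is_ideal I ->
  inPn lam i j -> i + rowlen I i <= j -> 1 <= m -> m.+1 <= i ->
  (m + rowlen I m <= j) + Xt I i j m.+1 = (m.+1 + rowlen I m.+1 <= j) + Yt I i j m.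
Proof.
move=> Hs HI Hij Hn h1 h2.
have hd := nu_dec Hs HI h1.
have n1 := nu_le m Hs HI; have n2 := nu_le m.+1 Hs HI; have n3 := nu_le i Hs HI.
move: (Hij) => /and4P[k1 k2 k3 k4].
have p1 := part_mono Hs (_ : 1 <= m.+1) h2 k2.
have p2 := part_mono Hs h1 (leqnSn m) (_ : m.+1 <= size lam).
rewrite /Xt /Yt /inPn /= -!subn1.
have := p1 isT; have := p2 (leq_trans h2 k2); lia.
Qed.

Lemma low_ind lam (I : {set box lam}) i j m : strict_partition lam -> is_ideal I ->
  inPn lam i j -> i + rowlen I i <= j -> 1 <= m <= i ->
  \sum_(0 <= a < m.+1) (Xt I i j a : nat) = (m + rowlen I m <= j) + \sum_(0 <= a < m) (Yt I i j a : nat).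
Proof.
move=> Hs HI Hij Hn; elim: m => [//|m IH] /andP[_ hm].
case: (posnP m) => [->|m0].
  rewrite big_nat_recr //= big_nat1 big_nat1.
  move: (Hij) => /and4P[k1 k2 k3 k4].
  have n3 := nu_le i Hs HI.
  have p1 := part_mono Hs (leqnn 1) k1 k2.
  rewrite /Xt /Yt /inPn /=; lia.
rewrite (big_nat_recr m.+1) //= IH; last by rewrite m0 /=; lia.
rewrite (big_nat_recr m) //= -addnA [_ + Xt _ _ _ _]addnC addnA low_step //; lia.
Qed.

Definition Pt lam (I : {set box lam}) i j a : bool :=
  [&& inPn lam a (a + rowlen I a).-1, i <= a & j <= (a + rowlen I a).-1] &&
  [&& inPn lam a (a + rowlen I a).-1, ((a + rowlen I a).-1).+1 == a + rowlen I a &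
      (rowlen I a == 1) || (rowlen I a.+1 + 2 <= rowlen I a)].

Definition Qt lam (I : {set box lam}) i j a : bool :=
  [&& inPn lam a (a + rowlen I a), i < a, j < a + rowlen I a & a < a + rowlen I a] &&
  [&& inPn lam a (a + rowlen I a), a + rowlen I a == a + rowlen I a &
      (a == 1) || (rowlen I a + 2 <= rowlen I a.-1)].

Definition Cn lam (I : {set box lam}) i j t : bool := corner_ij lam i j t && corner_in t I.

Definition Ht lam (I : {set box lam}) j a : bool := (0 < rowlen I a) && (j < a + rowlen I a).


Ltac bsimp := repeat match goal with
 | H : is_true (_ && _) |- _ => case/andP: H => ? ?
 | |- is_true (_ && _) => apply/andP; split
end.

Lemma EP_lem lam (I : {set box lam}) i j m : strict_partition lam -> is_ideal I ->
  i <= m -> 1 <= m ->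
  Pt I i j m = Ht I j m && ((rowlen I m == 1) || (rowlen I m.+1 + 2 <= rowlen I m)).
Proof.
move=> Hs HI hm h1.
have n1 := nu_le m Hs HI.
have q2 : 0 < rowlen I m -> m <= size lam by move=> /(nu_pos HI) /andP[].
rewrite /Pt /Ht /inPn -subn1; apply/idP/idP => H; bsimp; lia.
Qed.

Lemma EQ_lem lam (I : {set box lam}) i j m : strict_partition lam -> is_ideal I ->
  i <= m -> 1 <= m ->
  Qt I i j m.+1 = [&& Ht I j m.+1, rowlen I m.+1 < part lam m.+1 & rowlen I m.+1 + 2 <= rowlen I m].
Proof.
move=> Hs HI hm h1.
have hd := nu_dec Hs HI h1.
have q1 : 0 < rowlen I m.+1 -> m.+1 <= size lam by move=> /(nu_pos HI) /andP[].
rewrite /Qt /Ht /inPn /=; apply/idP/idP => H; bsimp; try (apply/orP; right); lia.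
Qed.

Lemma EC_lem lam (I : {set box lam}) i j m : strict_partition lam -> is_ideal I ->
  i <= m -> 1 <= m ->
  Cn I i j m = [&& Ht I j m.+1, rowlen I m.+1 == part lam m.+1 & part lam m.+1 + 2 <= rowlen I m].
Proof.
move=> Hs HI hm h1.
have n1 := nu_le m Hs HI; have n2 := nu_le m.+1 Hs HI.
have q1 : 0 < rowlen I m.+1 -> m.+1 <= size lam by move=> /(nu_pos HI) /andP[].
have q3 : m.+1 <= size lam -> 0 < part lam m.+1.
  by move=> h; apply: part_pos => //; lia.
have q4 : m < size lam -> part lam m.+1 < part lam m by move=> h; apply: part_dec.
rewrite /Cn /Ht /corner_ij /corner_in /is_corner -subn1; apply/idP/idP => H; bsimp; lia.
Qed.

Lemma high_step lam (I : {set box lam}) i j m : strict_partition lam -> is_ideal I ->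
  inPn lam i j -> i <= m ->
  Pt I i j m + Ht I j m.+1 = Ht I j m + Qt I i j m.+1 + Cn I i j m.
Proof.
move=> Hs HI Hij hm.
move: (Hij) => /and4P[k1 k2 k3 k4].
have h1 : 1 <= m by lia.
have hd := nu_dec Hs HI h1.
have n2 := nu_le m.+1 Hs HI.
have q1 : 0 < rowlen I m.+1 -> m.+1 <= size lam by move=> /(nu_pos HI) /andP[].
rewrite (@EP_lem lam I i j m Hs HI hm h1) (@EQ_lem lam I i j m Hs HI hm h1) (@EC_lem lam I i j m Hs HI hm h1).
case: (boolP (Ht I j m.+1)) => H1.
  have H0 : Ht I j m by move: H1; rewrite /Ht; bsimp; lia.
  rewrite H0 /=; move: H1; rewrite /Ht => /andP[H1 H2].
  have -> : (rowlen I m == 1) = false by apply/negP => /eqP; lia.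
  case: (ltngtP (rowlen I m.+1) (part lam m.+1)) => e; [ | lia | ].
    by rewrite /= addn0 addnC.
    by rewrite /= -e addn0 addnC.
rewrite /= !addn0.
case: (boolP (Ht I j m)) => H0 //=.
move: H0 H1; rewrite /Ht => /andP[H0 H2] H1.
have : ~~ (0 < rowlen I m.+1) || ~~ (j < m.+1 + rowlen I m.+1) by rewrite -negb_and.
lia.
Qed.

Lemma bnd_gt lam : size lam < bnd lam.
Proof. rewrite /bnd; lia. Qed.

Lemma high_ind lam (I : {set box lam}) i j : strict_partition lam -> is_ideal I ->
  inPn lam i j -> forall k m, m + k = bnd lam -> i <= m ->
  \sum_(m <= a < bnd lam) (Pt I i j a : nat) =
  Ht I j m + \sum_(m.+1 <= a < bnd lam) (Qt I i j a : nat) + \sum_(m <= t < bnd lam) (Cn I i j t : nat).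
Proof.
move=> Hs HI Hij; have hb := bnd_gt lam.
elim=> [|k IH] m hm him.
  rewrite addn0 in hm; rewrite !big_geq; try lia.
  rewrite /Ht nu0 //=; last by apply/negP => /andP[_ h]; lia.
have hmN : m < bnd lam by lia.
rewrite (big_ltn hmN) (big_ltn hmN) (IH m.+1) //; try lia.
have hs := high_step Hs HI Hij him.
case: (ltnP m.+1 (bnd lam)) => hN.
  rewrite [\sum_(m.+1 <= a < bnd lam) (Qt I i j a : nat)](big_ltn hN); lia.
have hN' : m.+1 = bnd lam by lia.
have hQ : Qt I i j m.+1 = false.
  by rewrite /Qt /inPn; apply/negP => /andP[/and4P[/and4P[_ h _ _] _ _ _] _]; lia.
rewrite hQ in hs; rewrite !big_geq; try lia.
Qed.

Lemma S1_eq lam (I : {set box lam}) i j : strict_partition lam -> is_ideal I ->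
  \sum_(p : box lam | [&& inP p, p.1 <= i & p.2 <= j]%N) Tplus I p =
  \sum_(0 <= a < bnd lam) (Xt I i j a : nat).
Proof.
move=> Hs HI.
pose C := fun a b => [&& inPn lam a b, a <= i & b <= j].
pose G := fun a b => [&& inPn lam a b, b == a + rowlen I a & (a == 1) || (rowlen I a + 2 <= rowlen I a.-1)].
have HG : forall a b, G a b -> b = a + rowlen I a by move=> a b /and3P[_ /eqP -> _].
have HB : forall a b, G a b -> b < bnd lam by move=> a b /and3P[h _ _]; have [] := inPn_bnd Hs h.
etransitivity; last exact: (@sum_box_rows lam C G _ HG HB).
by apply: eq_bigr => p _; rewrite Tplus_char.
Qed.

Lemma S2_eq lam (I : {set box lam}) i j : strict_partition lam -> is_ideal I ->
  \sum_(p : box lam | [&& inP p, i <= p.1 & j <= p.2]%N) Tminus I p =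
  \sum_(0 <= a < bnd lam) (Pt I i j a : nat).
Proof.
move=> Hs HI.
pose C := fun a b => [&& inPn lam a b, i <= a & j <= b].
pose G := fun a b => [&& inPn lam a b, b.+1 == a + rowlen I a & (rowlen I a == 1) || (rowlen I a.+1 + 2 <= rowlen I a)].
have HG : forall a b, G a b -> b = (a + rowlen I a).-1 by move=> a b /and3P[_ /eqP <- _].
have HB : forall a b, G a b -> b < bnd lam by move=> a b /and3P[h _ _]; have [] := inPn_bnd Hs h.
etransitivity; last exact: (@sum_box_rows lam C G _ HG HB).
by apply: eq_bigr => p _; rewrite Tminus_char.
Qed.

Lemma S3_eq lam (I : {set box lam}) i j : strict_partition lam -> is_ideal I ->
  \sum_(p : box lam | [&& inP p, p.1 < i, p.2 < j & p.1 < p.2]%N) Tminus I p =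
  \sum_(0 <= a < bnd lam) (Yt I i j a : nat).
Proof.
move=> Hs HI.
pose C := fun a b => [&& inPn lam a b, a < i, b < j & a < b].
pose G := fun a b => [&& inPn lam a b, b.+1 == a + rowlen I a & (rowlen I a == 1) || (rowlen I a.+1 + 2 <= rowlen I a)].
have HG : forall a b, G a b -> b = (a + rowlen I a).-1 by move=> a b /and3P[_ /eqP <- _].
have HB : forall a b, G a b -> b < bnd lam by move=> a b /and3P[h _ _]; have [] := inPn_bnd Hs h.
etransitivity; last exact: (@sum_box_rows lam C G _ HG HB).
by apply: eq_bigr => p _; rewrite Tminus_char.
Qed.

Lemma S4_eq lam (I : {set box lam}) i j : strict_partition lam -> is_ideal I ->
  \sum_(p : box lam | [&& inP p, i < p.1, j < p.2 & p.1 < p.2]%N) Tplus I p =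
  \sum_(0 <= a < bnd lam) (Qt I i j a : nat).
Proof.
move=> Hs HI.
pose C := fun a b => [&& inPn lam a b, i < a, j < b & a < b].
pose G := fun a b => [&& inPn lam a b, b == a + rowlen I a & (a == 1) || (rowlen I a + 2 <= rowlen I a.-1)].
have HG : forall a b, G a b -> b = a + rowlen I a by move=> a b /and3P[_ /eqP -> _].
have HB : forall a b, G a b -> b < bnd lam by move=> a b /and3P[h _ _]; have [] := inPn_bnd Hs h.
etransitivity; last exact: (@sum_box_rows lam C G _ HG HB).
by apply: eq_bigr => p _; rewrite Tplus_char.
Qed.

Lemma K_eq lam (I : {set box lam}) i j : 1 <= size lam ->
  \sum_(1 <= t < size lam | corner_ij lam i j t) (corner_in t I : nat) =
  \sum_(0 <= t < bnd lam) (Cn I i j t : nat).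
Proof.
move=> hl; have hb := bnd_gt lam.
rewrite [RHS](@big_cat_nat _ _ _ 1) //=.
rewrite big_nat1 [X in _ = _ + X](@big_cat_nat _ _ _ (size lam)) //=; last by lia.
rewrite [X in _ = _ + (_ + X)]big1_seq; last first.
  move=> t /andP[_]; rewrite mem_index_iota => /andP[h1 h2].
  by rewrite /Cn /corner_ij /is_corner; apply/eqP; rewrite eqb0; apply/negP; rewrite -subn1; lia.
rewrite /Cn /corner_ij /is_corner /= addn0 add0n big_mkcond /=.
by apply: eq_bigr => t _; case: ifP.
Qed.

Lemma pointwise lam (I : {set box lam}) i j : strict_partition lam -> is_ideal I ->
  inPn lam i j ->
  Rshift i j I = Posz (1 + \sum_(1 <= t < size lam | corner_ij lam i j t) (corner_in t I : nat)).
Proof.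
move=> Hs HI Hij.
move: (Hij) => /and4P[k1 k2 k3 k4].
have hb := bnd_gt lam.
have hl : 1 <= size lam by lia.
rewrite /Rshift S1_eq // S2_eq // S3_eq // S4_eq // K_eq //.
have hni := nu_le i Hs HI.
case: (ltnP j (i + rowlen I i)) => hmem.
- (* [i,j] in I *)
  have X0 : \sum_(0 <= a < bnd lam) (Xt I i j a : nat) = 0.
    rewrite big1_seq // => a /andP[_]; rewrite mem_index_iota => /andP[_ ha].
    rewrite /Xt; case: (boolP (inPn lam a (a + rowlen I a))) => //= hin.
    case: (boolP (a <= i)) => //= hai; case: (boolP (a + rowlen I a <= j)) => //= haj.
    move: (hin) => /and4P[a1 a2 a3 a4].
    have pm := part_mono Hs a1 hai k2.
    have := @clos lam I i j a j Hs HI _ _ hai (leqnn j).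
    rewrite /inPn; move=> /(_ _ _); lia.
  have Y0 : \sum_(0 <= a < bnd lam) (Yt I i j a : nat) = 0.
    rewrite big1_seq // => a /andP[_]; rewrite mem_index_iota => /andP[_ ha].
    rewrite /Yt; case: (boolP (inPn lam a (a + rowlen I a).-1)) => //= hin.
    case: (boolP (a < i)) => //= hai; case: (boolP ((a + rowlen I a).-1 < j)) => //= haj.
    move: (hin) => /and4P[a1 a2 a3 a4].
    have pm := part_mono Hs a1 (ltnW hai) k2.
    have := @clos lam I i j a j Hs HI _ _ (ltnW hai) (leqnn j).
    rewrite /inPn -subn1 in a3 a4 haj *; move=> /(_ _ _); lia.
  have HI0 := @high_ind lam I i j Hs HI Hij (bnd lam - i) i (_ : _) (leqnn i).
  rewrite subnKC in HI0; last by lia.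
  have HH : Ht I j i = true by rewrite /Ht; lia.
  rewrite HH in HI0; move: HI0 => /(_ erefl) HI0.
  rewrite [\sum_(0 <= a < bnd lam) (Pt I i j a : nat)](@big_cat_nat _ _ _ i) //=; try lia.
  rewrite [\sum_(0 <= a < i) (Pt I i j a : nat)]big1_seq; last first.
    move=> a /andP[_]; rewrite mem_index_iota => /andP[_ ha].
    by rewrite /Pt; apply/eqP; rewrite eqb0; apply/negP => /andP[/and3P[_ h _] _]; lia.
  rewrite [\sum_(0 <= a < bnd lam) (Qt I i j a : nat)](@big_cat_nat _ _ _ i.+1) //=; try lia.
  rewrite [\sum_(0 <= a < i.+1) (Qt I i j a : nat)]big1_seq; last first.
    move=> a /andP[_]; rewrite mem_index_iota => /andP[_ ha].
    by rewrite /Qt; apply/eqP; rewrite eqb0; apply/negP => /andP[/and4P[_ h _ _] _]; lia.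
  rewrite [\sum_(0 <= a < bnd lam) (Cn I i j a : nat)](@big_cat_nat _ _ _ i) //=; try lia.
  rewrite [\sum_(0 <= a < i) (Cn I i j a : nat)]big1_seq; last first.
    move=> a /andP[_]; rewrite mem_index_iota => /andP[_ ha].
    by rewrite /Cn /corner_ij; apply/eqP; rewrite eqb0; apply/negP => /andP[/and3P[_ h _] _]; lia.
  rewrite X0 Y0 !add0n HI0; lia.
- (* [i,j] not in I *)
  have hm : forall a b, a <= b < a + rowlen I a -> i <= a -> j <= b -> False.
    move=> a b hab hia hjb.
    have := @clos lam I a b i j Hs HI hab Hij hia hjb; lia.
  have P0 : \sum_(0 <= a < bnd lam) (Pt I i j a : nat) = 0.
    rewrite big1_seq // => a _; apply/eqP; rewrite eqb0; apply/negP.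
    rewrite /Pt /inPn -subn1 => /andP[/and3P[/and4P[a1 a2 a3 a4] a5 a6] _].
    apply: (hm a (a + rowlen I a - 1)) => //; lia.
  have Q0 : \sum_(0 <= a < bnd lam) (Qt I i j a : nat) = 0.
    rewrite big1_seq // => a _; apply/eqP; rewrite eqb0; apply/negP.
    rewrite /Qt /inPn => /andP[/and4P[/and4P[a1 a2 a3 a4] a5 a6 a7] _].
    apply: (hm a (a + rowlen I a - 1)) => //; lia.
  have C0 : \sum_(0 <= a < bnd lam) (Cn I i j a : nat) = 0.
    rewrite big1_seq // => t _; apply/eqP; rewrite eqb0; apply/negP.
    rewrite /Cn /corner_ij /is_corner /corner_in -subn1.
    move=> /andP[/and3P[/and3P[t1 t2 t3] t4 t5] /andP[/eqP t6 t7]].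
    have pp : 0 < part lam t.+1 by apply: part_pos => //; lia.
    apply: (hm t.+1 (t + part lam t.+1)); lia.
  have L := @low_ind lam I i j i Hs HI Hij hmem (_ : _).
  move: L => /(_ _) L; have {}L := L _.
  rewrite [\sum_(0 <= a < bnd lam) (Xt I i j a : nat)](@big_cat_nat _ _ _ i.+1) //=; try lia.
  rewrite [\sum_(i.+1 <= a < bnd lam) (Xt I i j a : nat)]big1_seq; last first.
    move=> a /andP[_]; rewrite mem_index_iota => /andP[ha _].
    by rewrite /Xt; apply/eqP; rewrite eqb0; apply/negP => /andP[/and3P[_ h _] _]; lia.
  rewrite [\sum_(0 <= a < bnd lam) (Yt I i j a : nat)](@big_cat_nat _ _ _ i) //=; try lia.
  rewrite [\sum_(i <= a < bnd lam) (Yt I i j a : nat)]big1_seq; last first.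
    move=> a /andP[_]; rewrite mem_index_iota => /andP[ha _].
    by rewrite /Yt; apply/eqP; rewrite eqb0; apply/negP => /andP[/and4P[_ h _ _] _]; lia.
  rewrite P0 Q0 C0 L; lia.
Qed.

Unset Implicit Arguments.
Local Open Scope ring_scope.

Theorem lemma5p4 (R : realFieldType) (lam : seq nat) (mu : {set box lam} -> R)
    (i j : nat) :
  strict_partition lam -> is_distribution mu -> inPn lam i j ->
  expect mu (Rshift i j) =
    1 + \sum_(1 <= t < size lam | corner_ij lam i j t) prob mu (corner_in t).
Proof.
move=> Hs [_ [_ Hsum]] Hij.
rewrite /expect.
transitivity (\sum_(I : {set box lam} | is_ideal I) (mu I +
    \sum_(1 <= t < size lam | corner_ij lam i j t) (if corner_in t I then mu I else 0))).
  apply: eq_bigr => I HI; rewrite pointwise // -pmulrn natrD mulrDr.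
  rewrite natr_sum mulr1 mulr_sumr; congr (_ + _); apply: eq_bigr => t _.
  by case: (corner_in t I); rewrite ?mulr1 ?mulr0.
rewrite big_split /= Hsum; congr (_ + _).
rewrite exchange_big /=; apply: eq_bigr => t _.
by rewrite /prob -big_mkcondr.
Qed.
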